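(* Let $\rho>1$ and let $\mathbf{p}=(p_1,\ldots,p_n)$ be a probability distribution with $p_1\geq p_2\geq\cdots\geq p_n>0$ and $p_1/p_n\leq\rho$. Then $$H(\mathbf{p})\geq \log_2 n-\left(\frac{\rho\ln\rho}{\rho-1}-1-\ln\frac{\rho\ln\rho}{\rho-1}\right)\frac{1}{\ln 2}.$$
   Context: $H(\mathbf{p})=-\sum_i p_i\log_2 p_i$ is the Shannon entropy in bits, and $\ln$ is the natural logarithm. *)

(* Defs.v *)
From Stdlib Require Import Reals.
Open Scope R_scope.

Definition log2 (x : R) : R := ln x / ln 2.

Fixpoint sumR (n : nat) (f : nat -> R) : R :=
  match n with
  | O => 0
  | S m => sumR m f + f m
  end.

Definition entropy (n : nat) (p : nat -> R) : R :=
  - sumR n (fun i => p i * log2 (p i)).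

(* Main.v *)
Require Import Defs.
From Stdlib Require Import Reals Lra Lia Psatz.
Open Scope R_scope.

Lemma ln_le_sub1 x : 0 < x -> ln x <= x - 1.
Proof. intros H. pose proof (exp_ineq1_le (ln x)). rewrite exp_ln in H0; lra. Qed.

Lemma tangent u y : 0 < u -> 0 < y -> y * ln y + (ln y + 1) * (u - y) <= u * ln u.
Proof.
  intros Hu Hy.
  assert (H : ln (y / u) <= y / u - 1) by (apply ln_le_sub1; apply Rdiv_lt_0_compat; lra).
  unfold Rdiv in H. rewrite ln_mult in H by (auto; apply Rinv_0_lt_compat; lra).
  rewrite ln_Rinv in H by lra.
  assert (u * (ln y - ln u) <= u * (y * / u - 1)) by (apply Rmult_le_compat_l; lra).
  replace (u * (y * / u - 1)) with (y - u) in H0 by (field; lra).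
  nra.
Qed.

Lemma key rho y : 1 < rho -> 1 <= y <= rho -> (rho - 1) * (y * ln y) <= (y - 1) * (rho * ln rho).
Proof.
  intros Hr Hy.
  pose proof (tangent 1 y ltac:(lra) ltac:(lra)) as T1. rewrite ln_1 in T1.
  pose proof (tangent rho y ltac:(lra) ltac:(lra)) as T2.
  assert (A1 : (rho - y) * (y * ln y + (ln y + 1) * (1 - y)) <= (rho - y) * (1 * 0))
    by (apply Rmult_le_compat_l; lra).
  assert (A2 : (y - 1) * (y * ln y + (ln y + 1) * (rho - y)) <= (y - 1) * (rho * ln rho))
    by (apply Rmult_le_compat_l; lra).
  nra.
Qed.

Lemma sumR_ext n f g : (forall i, (i < n)%nat -> f i = g i) -> sumR n f = sumR n g.
Proof. induction n; simpl; intros H; auto. rewrite IHn by (intros; apply H; lia). rewrite H by lia. auto. Qed.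

Lemma sumR_le n f g : (forall i, (i < n)%nat -> f i <= g i) -> sumR n f <= sumR n g.
Proof. induction n; simpl; intros H; [lra|]. pose proof (IHn ltac:(intros; apply H; lia)). pose proof (H n ltac:(lia)). lra. Qed.

Lemma sumR_lin n f a b : sumR n (fun i => a * f i + b) = a * sumR n f + b * INR n.
Proof. induction n; simpl sumR; [simpl; ring|]. rewrite IHn, S_INR. ring. Qed.

Lemma sumR_add n f g : sumR n (fun i => f i + g i) = sumR n f + sumR n g.
Proof. induction n; simpl; [ring|]. rewrite IHn. ring. Qed.

Lemma sumR_scal n f a : sumR n (fun i => f i * a) = sumR n f * a.
Proof. induction n; simpl; [ring|]. rewrite IHn. ring. Qed.

(* p_1,...,p_n is represented by p 0, ..., p (n-1). *)
Theorem theorem2 (rho : R) (n : nat) (p : nat -> R) :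
  1 < rho ->
  (1 <= n)%nat ->
  sumR n p = 1 ->
  (forall i, (i < n)%nat -> 0 < p i) ->
  (forall i j, (i <= j)%nat -> (j < n)%nat -> p j <= p i) ->
  p 0%nat / p (n - 1)%nat <= rho ->
  entropy n p >=
    log2 (INR n)
    - (rho * ln rho / (rho - 1) - 1 - ln (rho * ln rho / (rho - 1))) * (1 / ln 2).
Proof.
  intros Hr Hn Hs Hpos Hmono Hratio.
  set (m := p (n - 1)%nat).
  assert (Hm : 0 < m) by (apply Hpos; lia).
  set (N := INR n).
  assert (HN : 0 < N) by (unfold N; apply lt_0_INR; lia).
  assert (Hlr : 0 < ln rho) by (rewrite <- ln_1; apply ln_increasing; lra).
  set (t := rho * ln rho / (rho - 1)).
  assert (Ht : 0 < t) by (unfold t; apply Rdiv_lt_0_compat; nra).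
  assert (Hl2 : 0 < ln 2) by (rewrite <- ln_1; apply ln_increasing; lra).
  assert (HM : p 0%nat <= rho * m).
  { assert (p 0%nat / m * m <= rho * m).
    { apply Rmult_le_compat_r. lra. exact Hratio. }
    replace (p 0%nat / m * m) with (p 0%nat) in H by (field; lra). exact H. }
  assert (Hpt : forall i, (i < n)%nat ->
     p i * ln (p i) + p i * ln N <= p i * (t + ln (N * m)) - m * t).
  { intros i Hi.
    assert (Hpi : 0 < p i) by auto.
    assert (Hlo : m <= p i) by (apply Hmono; lia).
    assert (Hhi : p i <= rho * m) by (pose proof (Hmono 0%nat i ltac:(lia) Hi); lra).
    set (y := p i / m).
    assert (Hy : p i = m * y) by (unfold y; field; lra).
    assert (Hy1 : 1 <= y <= rho).
    { rewrite Hy in Hlo, Hhi. split; nra. }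
    rewrite Hy.
    rewrite (ln_mult N m) by auto.
    rewrite (ln_mult m y) by lra.
    pose proof (key rho y Hr Hy1) as K.
    assert (K2 : y * ln y <= (y - 1) * t).
    { unfold t. apply (Rmult_le_reg_l (rho - 1)); [lra|].
      replace ((rho - 1) * ((y - 1) * (rho * ln rho / (rho - 1)))) with ((y-1)*(rho * ln rho)) by (field; lra).
      exact K. }
    assert (m * (y * ln y) <= m * ((y - 1) * t)) by (apply Rmult_le_compat_l; lra).
    nra. }
  pose proof (sumR_le n _ _ Hpt) as S.
  rewrite sumR_add in S.
  rewrite (sumR_ext n (fun i => p i * (t + ln (N * m)) - m * t) (fun i => (t + ln (N*m)) * p i + (- m * t))) in S
    by (intros; ring).
  rewrite sumR_lin, sumR_scal, Hs in S. fold N in S.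
  assert (L : ln (N * m * t) <= N * m * t - 1) by (apply ln_le_sub1; apply Rmult_lt_0_compat; [apply Rmult_lt_0_compat|]; assumption).
  rewrite ln_mult in L. 2: apply Rmult_lt_0_compat; assumption. 2: assumption.
  fold t.
  unfold entropy, log2.
  rewrite (sumR_ext n (fun i => p i * (ln (p i) / ln 2)) (fun i => (p i * ln (p i)) * (/ ln 2))) by (intros; unfold Rdiv; ring).
  rewrite sumR_scal.
  set (X := sumR n (fun i => p i * ln (p i))) in *.
  apply Rle_ge.
  assert (E : X + ln N <= t - 1 - ln t) by lra.
  assert (E2 : (X + ln N) * / ln 2 <= (t - 1 - ln t) * / ln 2)
    by (apply Rmult_le_compat_r; [apply Rlt_le, Rinv_0_lt_compat|]; lra).
  unfold Rdiv. lra.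
Qed.
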